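(* Let $M=\begin{bmatrix} r & s\\ a & b\end{bmatrix}$ be an integer matrix of rank two with $r\ge s>0$, $0<a\le b$ and $\gcd(r,s)=1$. For $\ell\in\mathbb{N}$ let $G_\ell(M)$ be the band graph of $M$. If $\ell<r+s-1$, then every connected component of $G_\ell(M)$ is finite. If $\ell\ge r+s-1$, then for every $w_0\in\{0,1,\dots,\ell\}$ there exists $z_0\in\mathbb{N}$ such that $(w_0,z_0)$ belongs to an infinite connected component of $G_\ell(M)$.
   Context: $\mathbb{N}=\{0,1,2,\dots\}$. For $Q\subseteq\mathbb{Z}^n$ and an integer $n\times m$ matrix $M$, the graph $G_Q(M)$ has vertex set $Q$, and $u,v\in Q$ are joined by an edge iff $u-v$ or $v-u$ is a column of $M$. A connected component is infinite if it has infinitely many vertices, finite otherwise. For a $2\times 2$ integer matrix $M$ with positive entries and $\ell\in\mathbb{N}$, the band graph is $G_\ell(M)=G_{Q_\ell}(M)$ with $Q_\ell=\{u\in\mathbb{N}^2\mid u_1\le \ell\}$. *)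

(* Defs.v *)
From Stdlib Require Import ZArith List Relations.
Open Scope Z_scope.

(* A 2x2 integer matrix M = [[r, s]; [a, b]] is given by its entries;
   its columns are (r, a) and (s, b). *)

Definition in_band (l : nat) (u : Z * Z) : Prop :=
  0 <= fst u <= Z.of_nat l /\ 0 <= snd u.

Definition is_col (r s a b : Z) (d : Z * Z) : Prop :=
  d = (r, a) \/ d = (s, b).

Definition diff (u v : Z * Z) : Z * Z := (fst u - fst v, snd u - snd v).

Definition band_edge (r s a b : Z) (l : nat) (u v : Z * Z) : Prop :=
  in_band l u /\ in_band l v /\
  (is_col r s a b (diff u v) \/ is_col r s a b (diff v u)).

Definition band_connected (r s a b : Z) (l : nat) (u v : Z * Z) : Prop :=
  in_band l u /\ clos_refl_trans _ (band_edge r s a b l) u v.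

Definition component_finite (r s a b : Z) (l : nat) (u : Z * Z) : Prop :=
  exists L : list (Z * Z), forall v, band_connected r s a b l u v -> In v L.

Definition component_infinite (r s a b : Z) (l : nat) (u : Z * Z) : Prop :=
  ~ component_finite r s a b l u.

(* Main.v *)
Require Import Defs.
From Stdlib Require Import ZArith List Relations Lia Znumtheory.
Open Scope Z_scope.

Section Cyc.
Variable E : Z*Z -> Z*Z -> Prop.
Variables (l : nat) (p q A B : Z).
Hypothesis hp : p > 0. Hypothesis hq : q > 0.
Hypothesis hA : A > 0. Hypothesis hB : B > 0.
Hypothesis hl : Z.of_nat l >= p + q - 1.
Hypothesis Eup : forall x y, 0 <= x -> x + p <= Z.of_nat l -> 0 <= y -> E (x,y) (x+p, y+A).
Hypothesis Edn : forall x y, q <= x <= Z.of_nat l -> B <= y -> E (x,y) (x-q, y-B).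

Lemma cyc_steps x y : 0 <= x <= p + q - 1 -> y >= (p+q) * B ->
  forall k : nat, Z.of_nat k <= p + q ->
  exists xk U D, 0 <= xk <= p+q-1 /\ xk = x + U*p - D*q /\ U + D = Z.of_nat k /\
   0 <= U /\ 0 <= D /\ clos_refl_trans _ E (x,y) (xk, y + U*A - D*B).
Proof.
  intros Hx Hy k. induction k as [|k IH]; intros Hk.
  - exists x, 0, 0. repeat split; try lia. replace (y + 0*A - 0*B) with y by ring. apply rt_refl.
  - destruct IH as [xk [U [D [H1 [H2 [H3 [H4 [H5 H6]]]]]]]]; [lia|].
    destruct (Z_le_gt_dec (xk + p) (p+q-1)).
    + exists (xk+p), (U+1), D. repeat split; try lia.
      eapply rt_trans; [exact H6|]. apply rt_step.
      replace (y + (U+1)*A - D*B) with (y + U*A - D*B + A) by ring.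
      apply Eup; nia.
    + exists (xk-q), U, (D+1). repeat split; try lia.
      eapply rt_trans; [exact H6|]. apply rt_step.
      replace (y + U*A - (D+1)*B) with (y + U*A - D*B - B) by ring.
      apply Edn; nia.
Qed.

Lemma cyc x y : 0 <= x <= p + q - 1 -> y >= (p+q) * B ->
  clos_refl_trans _ E (x,y) (x, y + q*A - p*B).
Proof.
  intros Hx Hy. destruct (cyc_steps x y Hx Hy (Z.to_nat (p+q))) as [xk [U [D [H1 [H2 [H3 [H4 [H5 H6]]]]]]]]; [lia|].
  rewrite Z2Nat.id in H3 by lia.
  assert (HU : U = q).
  { assert (xk - x = (p+q) * (U - q)) by nia.
    destruct (Z_le_gt_dec (U - q) 0); destruct (Z_le_gt_dec (U-q) (-1)); nia. }
  subst U. assert (D = p) by lia. subst D. assert (xk = x) by nia. subst xk. rewrite H in H6. exact H6.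
Qed.

Lemma descend : forall N : nat, forall x y, 0 <= x <= Z.of_nat N -> x <= Z.of_nat l ->
  y >= x * B + (p+q)*B -> exists x' y', 0 <= x' <= p+q-1 /\ y' >= (p+q)*B /\
  clos_refl_trans _ E (x,y) (x',y').
Proof.
  induction N as [|N IH]; intros x y Hx Hxl Hy.
  - exists x, y. repeat split; try lia. apply rt_refl.
  - destruct (Z_le_gt_dec x (p+q-1)).
    + exists x, y. repeat split; try lia. apply rt_refl.
    + destruct (IH (x-q) (y-B)) as [x' [y' [H1 [H2 H3]]]]; try lia; try nia.
      exists x', y'. repeat split; try lia. eapply rt_trans; [|exact H3].
      apply rt_step. apply Edn; nia.
Qed.

Lemma unbounded w0 z0 : 0 <= w0 <= Z.of_nat l -> z0 = w0 * B + (p+q)*B ->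
  q*A - p*B > 0 ->
  forall M, exists v, clos_refl_trans _ E (w0,z0) v /\ snd v >= M.
Proof.
  intros Hw Hz Hd M.
  destruct (descend (Z.to_nat w0) w0 z0) as [x' [y' [H1 [H2 H3]]]]; try lia.
  assert (Hk : forall k : nat, clos_refl_trans _ E (x',y') (x', y' + Z.of_nat k * (q*A - p*B))).
  { induction k.
    - replace (y' + Z.of_nat 0 * (q * A - p * B)) with y' by (simpl; ring). apply rt_refl.
    - eapply rt_trans; [exact IHk|].
      replace (y' + Z.of_nat (S k) * (q * A - p * B)) with
        ((y' + Z.of_nat k * (q * A - p * B)) + q*A - p*B) by lia.
      apply cyc; nia. }
  exists (x', y' + Z.of_nat (Z.to_nat (Z.abs M)) * (q*A - p*B)).
  split. eapply rt_trans; [exact H3| apply Hk].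
  simpl. rewrite Z2Nat.id by lia. nia.
Qed.
End Cyc.

Lemma no_mult n K : n > 0 -> 0 <= n*K - 1 <= n - 2 -> False.
Proof. intros. destruct (Z_le_gt_dec K 0); nia. Qed.

Definition zr (K : Z) : list Z := map (fun k => Z.of_nat k - K) (seq 0 (Z.to_nat (2*K+1))).

Lemma zr_in K z : -K <= z <= K -> In z (zr K).
Proof.
  intros H. unfold zr. apply in_map_iff. exists (Z.to_nat (z + K)). split.
  - rewrite Z2Nat.id by lia. ring.
  - apply in_seq. lia.
Qed.

Section Fin.
Variables (r s a b : Z) (l : nat) (T m c : Z).
Hypothesis hr : r > 0. Hypothesis hs : s > 0.
Hypothesis hl : Z.of_nat l <= r + s - 2.
Hypothesis hT : T * s = 1 - m * (r+s).

Definition Inv (pt : Z*Z) : Prop := exists i j, T < i + j < T + (r+s) /\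
  fst pt = i*r - j*s /\ snd pt = i*a - j*b + c.

Lemma cut i j : (i + j = T \/ i + j = T + (r+s)) -> 0 <= i*r - j*s <= Z.of_nat l -> False.
Proof.
  intros [H|H] H2.
  - apply (no_mult (r+s) (i + m)); [lia|].
    assert (i*r - j*s = (r+s)*(i+m) - 1).
    { assert (j = T - i) by lia. subst j. nia. }
    lia.
  - apply (no_mult (r+s) (i + m - s)); [lia|].
    assert (i*r - j*s = (r+s)*(i+m-s) - 1).
    { assert (j = T + (r+s) - i) by lia. subst j. nia. }
    lia.
Qed.

Lemma inv_step u v : band_edge r s a b l u v -> Inv u -> Inv v.
Proof.
  destruct u as [x y], v as [x' y'].
  intros [Hu [Hv He]] [i [j [Ht [Hx Hy]]]]. simpl in *.
  unfold in_band in *; simpl in *.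
  unfold is_col, diff in He; simpl in He.
  destruct He as [[He|He]|[He|He]]; injection He as E1 E2.
  -
    exists (i-1), j. simpl.
    destruct (Z.eq_dec (i - 1 + j) T).
    + exfalso. apply (cut (i-1) j); [left; lia| lia].
    + repeat split; lia.
  - exists i, (j+1). simpl.
    destruct (Z.eq_dec (i + (j+1)) (T + (r+s))).
    + exfalso. apply (cut i (j+1)); [right; lia| lia].
    + repeat split; lia.
  - exists (i+1), j. simpl.
    destruct (Z.eq_dec (i + 1 + j) (T + (r+s))).
    + exfalso. apply (cut (i+1) j); [right; lia| lia].
    + repeat split; lia.
  - exists i, (j-1). simpl.
    destruct (Z.eq_dec (i + (j-1)) T).
    + exfalso. apply (cut i (j-1)); [left; lia| lia].
    + repeat split; lia.
Qed.

Lemma inv_crt u v : clos_refl_trans _ (band_edge r s a b l) u v ->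
  Inv u -> in_band l u -> Inv v /\ in_band l v.
Proof.
  induction 1 as [u v H| u | u w v H1 IH1 H2 IH2]; intros Hi Hb.
  - split. eapply inv_step; eauto. destruct H as [_ [H _]]. exact H.
  - auto.
  - destruct (IH1 Hi Hb). apply IH2; auto.
Qed.

Definition KK := (Z.abs T + (r+s)) * (s+1) + 1.
Definition LL : list (Z*Z) :=
  flat_map (fun i => map (fun t => (i*r - (t-i)*s, i*a - (t-i)*b + c)) (zr KK)) (zr KK).

Lemma inv_in v : Inv v -> in_band l v -> In v LL.
Proof.
  destruct v as [x y]. intros [i [j [Ht [Hx Hy]]]] [Hb1 Hb2]. simpl in *.
  unfold LL. apply in_flat_map. exists i. split.
  - apply zr_in. unfold KK.
    assert (i*(r+s) = x + (i+j)*s) by lia.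
    destruct (Z.abs_spec T) as [[? Ha]|[? Ha]]; rewrite Ha;
    destruct (Z_le_gt_dec i 0); nia.
  - apply in_map_iff. exists (i+j). split.
    + subst. f_equal; ring.
    + apply zr_in. unfold KK. destruct (Z.abs_spec T) as [[? Ha]|[? Ha]]; rewrite Ha; nia.
Qed.
End Fin.

Lemma part1 (r s a b : Z) : r > 0 -> s > 0 -> Z.gcd r s = 1 ->
  forall l : nat, Z.of_nat l < r + s - 1 ->
     forall u : Z * Z, in_band l u -> component_finite r s a b l u.
Proof.
  intros hr hs hg l hl [x0 y0] Hb.
  destruct (Zis_gcd_bezout r s 1) as [u v Huv].
  { rewrite <- hg. apply Zgcd_is_gcd. }
  set (n := r + s).
  set (d := (x0+1)*(u-v)).
  set (e := d / n).
  assert (Hdm : d = n * e + d mod n) by (apply Z.div_mod; lia).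
  assert (Hmb : 0 <= d mod n < n) by (apply Z.mod_pos_bound; lia).
  assert (Hnz : d mod n <> 0).
  { intro H0. rewrite H0 in Hdm. destruct Hb as [[Hb1 Hb2] _]. simpl in *.
    apply (no_mult n ((x0+1)*u - e*s)); [lia|].
    assert (Hds : d*s = (x0+1)*(u-v)*s) by reflexivity.
    assert (Hx : (x0+1) = n*((x0+1)*u - e*s)).
    { transitivity ((x0+1)*(u*r+v*s)); [rewrite Huv; ring|].
      assert (n*e*s = (x0+1)*(u-v)*s) by (rewrite <- Hds; rewrite Hdm; ring).
      unfold n in *. nia. }
    lia. }
  set (T := v - u + n*e).
  assert (hT : T * s = 1 - (u - e*s) * (r+s)) by (unfold T, n; rewrite <- Huv; ring).
  set (c := y0 - (x0*u*a - (-x0*v)*b)).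
  exists (LL r s a b T c).
  intros w [_ Hc].
  destruct (inv_crt r s a b l T (u - e*s) c hr hs ltac:(lia) hT _ _ Hc) as [Hi Hw]; auto.
  - exists (x0*u), (-x0*v). simpl. repeat split; try (unfold c; ring).
    + unfold T, n, d in *; lia.
    + unfold T, n, d in *; lia.
    + transitivity (x0*(u*r+v*s)); [rewrite Huv; ring| ring].
  - eapply inv_in; eauto. lia.
Qed.

Lemma max_list (L : list (Z*Z)) : exists M, forall v, In v L -> snd v < M.
Proof.
  induction L as [|h L [M HM]].
  - exists 0. intros v [].
  - exists (Z.max M (snd h + 1)). intros v [<-|H]; [lia|]. specialize (HM v H). lia.
Qed.

Lemma part2 (r s a b : Z) : r * b - s * a <> 0 -> r > 0 -> s > 0 -> 0 < a -> 0 < b ->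
  forall l : nat, Z.of_nat l >= r + s - 1 ->
     forall w0 : Z, 0 <= w0 <= Z.of_nat l ->
       exists z0 : Z, 0 <= z0 /\ component_infinite r s a b l (w0, z0).
Proof.
  intros Hdet hr hs ha hb l hl w0 Hw.
  assert (Hgen : forall p q A B, p > 0 -> q > 0 -> A > 0 -> B > 0 -> Z.of_nat l >= p + q - 1 ->
    (forall x y, 0 <= x -> x + p <= Z.of_nat l -> 0 <= y -> band_edge r s a b l (x,y) (x+p, y+A)) ->
    (forall x y, q <= x <= Z.of_nat l -> B <= y -> band_edge r s a b l (x,y) (x-q, y-B)) ->
    q*A - p*B > 0 ->
    exists z0 : Z, 0 <= z0 /\ component_infinite r s a b l (w0, z0)).
  { intros p q A B hp hq hA hB hl' Eu Ed Hd.
    exists (w0 * B + (p+q)*B). split; [nia|].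
    intros [L HL]. destruct (max_list L) as [M HM].
    destruct (unbounded _ l p q A B hp hq hA hB hl' Eu Ed w0 _ Hw eq_refl Hd M) as [v [Hv1 Hv2]].
    assert (In v L). { apply HL. split; [|exact Hv1]. split; simpl; nia. }
    specialize (HM v H). lia. }
  destruct (Z_lt_ge_dec 0 (r*b - s*a)).
  - apply (Hgen s r b a); try lia.
    + intros x y H1 H2 H3. repeat split; simpl; try lia. right. unfold is_col, diff; simpl. right. f_equal; ring.
    + intros x y H1 H2. repeat split; simpl; try lia. left. unfold is_col, diff; simpl. left. f_equal; ring.
  - apply (Hgen r s a b); try lia.
    + intros x y H1 H2 H3. repeat split; simpl; try lia. right. unfold is_col, diff; simpl. left. f_equal; ring.
    + intros x y H1 H2. repeat split; simpl; try lia. left. unfold is_col, diff; simpl. right. f_equal; ring.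
Qed.

Theorem proposition2p5 (r s a b : Z) :
  r * b - s * a <> 0 ->
  r >= s -> s > 0 -> 0 < a -> a <= b -> Z.gcd r s = 1 ->
  (forall l : nat, Z.of_nat l < r + s - 1 ->
     forall u : Z * Z, in_band l u -> component_finite r s a b l u) /\
  (forall l : nat, Z.of_nat l >= r + s - 1 ->
     forall w0 : Z, 0 <= w0 <= Z.of_nat l ->
       exists z0 : Z, 0 <= z0 /\ component_infinite r s a b l (w0, z0)).
Proof.
  intros. split.
  - apply part1; auto; lia.
  - apply part2; auto; lia.
Qed.
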